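(* For every $p\in\mathbb R^m$, $$H^+(p):=\min_{Q}\max_{w\in\Delta_K}\sum_{i=1}^m\sum_{a}w(a)D(Q_a\|\nu^i_a)p_i\;=\;H^-(p):=\max_{w\in\Delta_K}\min_{Q}\sum_{i=1}^m\sum_{a}w(a)D(Q_a\|\nu^i_a)p_i,$$ ($Q$ ranging over $(\Delta_{\mathcal X})^K$), and this common value $H(p)$ equals $$H(p)=\begin{cases}\max_{a\in[K]}-\big(\sum_i p_i\big)\log\Big(\sum_{x\in\mathcal X}\prod_{i=1}^m\nu^i_a(x)^{p_i/\sum_k p_k}\Big),&\text{if }\sum_ip_i>0,\\[2pt] \max_{a\in[K]}\min_{x\in\mathcal X}-\sum_ip_i\log\nu^i_a(x),&\text{if }\sum_ip_i\le0.\end{cases}$$ Moreover $H$ is Lipschitz continuous on $\mathbb R^m$ with Lipschitz constant $\sqrt m\log(1/\epsilon)$, and $H$ is non-decreasing in each coordinate $p_i$.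
   Context: $\mathcal X$ is a finite set, $\Delta_{\mathcal X}$ the probability distributions on $\mathcal X$, $\Delta_K$ the simplex on $[K]$, $D$ the KL divergence. Fix $m\ge2$ bandits $\nu^1,\dots,\nu^m$, $\nu^i=(\nu^i_a)_{a\in[K]}$, with $\nu^i_a\in\Delta_{\mathcal X}$ and $\nu^i_a(x)\ge\epsilon$ for all $i,a,x$, for some $\epsilon\in(0,1)$. *)

(* Defs.v *)
From HB Require Import structures.
From mathcomp Require Import all_boot all_order all_algebra.
From mathcomp Require Import all_classical all_reals all_analysis.
Set Implicit Arguments. Unset Strict Implicit. Unset Printing Implicit Defensive.
Import Order.TTheory GRing.Theory Num.Theory.
Local Open Scope classical_set_scope.
Local Open Scope ring_scope.

Section Defs.
Variable R : realType.

Definition is_dist (T : finType) (q : T -> R) : Prop :=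
  (forall t, 0 <= q t) /\ \sum_(t : T) q t = 1.

Definition KL (X : finType) (q r : X -> R) : R :=
  \sum_(x : X) (if q x == 0 then 0 else q x * ln (q x / r x)).

Variables (X : finType) (m K : nat) (nu : 'I_m -> 'I_K -> X -> R).

Definition obj (p : 'I_m -> R) (Q : 'I_K -> X -> R) (w : 'I_K -> R) : R :=
  \sum_(i < m) \sum_(a < K) w a * KL (Q a) (nu i a) * p i.

Definition is_Q (Q : 'I_K -> X -> R) : Prop := forall a, is_dist (Q a).

(* H^+(p) = min_Q max_w obj, H^-(p) = max_w min_Q obj (as inf/sup; attainment
   is asserted separately in the theorem) *)
Definition Hplus (p : 'I_m -> R) : R :=
  inf [set v | exists2 Q, is_Q Q &
         v = sup [set u | exists2 w, is_dist w & u = obj p Q w]].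

Definition Hminus (p : 'I_m -> R) : R :=
  sup [set v | exists2 w, is_dist w &
         v = inf [set u | exists2 Q, is_Q Q & u = obj p Q w]].

Definition Hform (p : 'I_m -> R) : R :=
  let s := \sum_(k < m) p k in
  if 0 < s then
    sup (range (fun a : 'I_K =>
       - s * ln (\sum_(x : X) \prod_(i < m) (nu i a x) `^ (p i / s))))
  else
    sup (range (fun a : 'I_K =>
       inf (range (fun x : X => - \sum_(i < m) p i * ln (nu i a x))))).

End Defs.

(* Main.v *)
Require Import Defs.
From HB Require Import structures.
From mathcomp Require Import all_boot all_order all_algebra.
From mathcomp Require Import all_classical all_reals all_analysis.
From mathcomp Require Import ring lra.
Import Order.TTheory GRing.Theory Num.Theory.
Local Open Scope classical_set_scope.
Local Open Scope ring_scope.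
Set Implicit Arguments. Unset Strict Implicit. Unset Printing Implicit Defensive.

Section Gen.
Variable R : realType.

Lemma sup_eq_max (E : set R) x : E x -> ubound E x -> sup E = x.
Proof.
move=> Ex ub; apply/le_anti/andP; split; first by apply: ge_sup => //; exists x.
by apply: ub_le_sup => //; exists x.
Qed.

Lemma inf_eq_min (E : set R) x : E x -> lbound E x -> inf E = x.
Proof.
move=> Ex lb; apply/le_anti/andP; split; last by apply: lb_le_inf => //; exists x.
by apply: ge_inf => //; exists x.
Qed.

Lemma argmax_ex (T : finType) (t0 : T) (f : T -> R) :
  exists t, forall u, f u <= f t.
Proof.
case: (@arg_maxP _ _ _ t0 predT f isT) => t _ H; exists t => u; exact: H.
Qed.

Lemma argmin_ex (T : finType) (t0 : T) (f : T -> R) :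
  exists t, forall u, f t <= f u.
Proof.
case: (@arg_minP _ _ _ t0 predT f isT) => t _ H; exists t => u; exact: H.
Qed.

Lemma sup_range_max (T : finType) (f : T -> R) t :
  (forall u, f u <= f t) -> sup (range f) = f t.
Proof. by move=> H; apply: sup_eq_max; [exists t|move=> _ [u _ <-]]. Qed.

Lemma inf_range_min (T : finType) (f : T -> R) t :
  (forall u, f t <= f u) -> inf (range f) = f t.
Proof. by move=> H; apply: inf_eq_min; [exists t|move=> _ [u _ <-]]. Qed.

Lemma dist_le1 (T : finType) (q : T -> R) t : is_dist q -> q t <= 1.
Proof.
case=> q0 q1; rewrite -q1 (bigD1 t) //= lerDl; exact: sumr_ge0.
Qed.

Definition delta (T : finType) (t : T) : T -> R := fun u => (u == t)%:R.

Lemma delta_dist (T : finType) (t : T) : is_dist (delta t).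
Proof.
split; first by move=> u; rewrite /delta ler0n.
rewrite (bigD1 t) //= big1 ?addr0 /delta ?eqxx // => u /negbTE ->; done.
Qed.

Lemma delta_sum (T : finType) (t : T) (c : T -> R) :
  \sum_u delta t u * c u = c t.
Proof.
rewrite (bigD1 t) //= big1 ?addr0 /delta ?eqxx ?mul1r // => u /negbTE ->.
by rewrite mul0r.
Qed.

Lemma ln_ge1V (y : R) : 0 < y -> 1 - y^-1 <= ln y.
Proof.
move=> y0.
have h : -1 < y^-1 - 1 by rewrite ltrBrDr addrC subrr invr_gt0.
have := le_ln1Dx h; rewrite addrCA subrr addr0 lnV ?posrE //.
by rewrite lerNl opprB.
Qed.

Lemma supW (T : finType) (t0 : T) (c : T -> R) :
  exists a, (forall b, c b <= c a) /\
    sup [set u | exists2 w, is_dist w & u = \sum_b w b * c b] = c a.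
Proof.
have [a Ha] := argmax_ex t0 c; exists a; split => //.
apply: sup_eq_max; first by exists (delta a); [exact: delta_dist|rewrite delta_sum].
move=> _ [w [w0 w1] ->].
apply: le_trans (_ : \sum_b w b * c a <= _).
  by apply: ler_sum => b _; apply: ler_wpM2l.
by rewrite -mulr_suml w1 mul1r.
Qed.

Definition Ent (T : finType) (q : T -> R) :=
  \sum_t (if q t == 0 then 0 else q t * ln (q t)).

Lemma Ent_le0 (T : finType) (q : T -> R) : is_dist q -> Ent q <= 0.
Proof.
move=> qd; apply: sumr_le0 => t _; case: ifP => // _.
apply: mulr_ge0_le0; first by case: qd.
by apply: ln_le0; apply: dist_le1.
Qed.

Lemma gibbs_pt (q g Z : R) : 0 <= q -> 0 < g -> 0 < Z ->
  q - g / Z <= (if q == 0 then 0 else q * ln q) - q * ln g + q * ln Z.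
Proof.
move=> q0 g0 Z0; case: ifPn => [/eqP ->|qn0].
  by rewrite !mul0r subr0 addr0 sub0r lerNl oppr0 divr_ge0 // ltW.
have qp : 0 < q by rewrite lt_neqAle eq_sym qn0.
have h := ln_ge1V (divr_gt0 (mulr_gt0 qp Z0) g0).
rewrite lnM ?posrE ?mulr_gt0 ?invr_gt0 // lnM ?posrE // lnV ?posrE // in h.
have := ler_wpM2l (ltW qp) h.
have -> : q * (1 - (q * Z / g)^-1) = q - g / Z.
  by field; rewrite ?gt_eqF.
move=> H; apply: le_trans H _; rewrite le_eqVlt; apply/orP; left; apply/eqP.
ring.
Qed.

Lemma gibbs (T : finType) (q g : T -> R) : is_dist q -> (forall t, 0 < g t) ->
  - ln (\sum_t g t) <= Ent q - \sum_t q t * ln (g t).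
Proof.
move=> [q0 q1] g0.
have Z0 : 0 < \sum_t g t.
  have [t _] : exists t : T, true.
    case: (pickP T) => [t _|H]; first by exists t.
    by move: q1; rewrite big_pred0 // => /eqP; rewrite eq_sym oner_eq0.
  by rewrite (bigD1 t) //= ltr_wpDr // sumr_ge0 // => u _; apply: ltW.
have H : \sum_t (q t - g t / \sum_u g u) <=
  \sum_t ((if q t == 0 then 0 else q t * ln (q t)) - q t * ln (g t) + q t * ln (\sum_u g u)).
  by apply: ler_sum => t _; apply: gibbs_pt.
move: H; rewrite sumrB -mulr_suml divff ?gt_eqF // q1 subrr.
rewrite big_split /= sumrB -mulr_suml q1 mul1r -/(Ent q).
by rewrite -lerBlDr sub0r.
Qed.

Lemma cauchy_schwarz (n : nat) (d : 'I_n -> R) :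
  \sum_i `|d i| <= Num.sqrt n%:R * Num.sqrt (\sum_i d i ^+ 2).
Proof.
rewrite -sqrtrM ?ler0n //.
have s0 : 0 <= \sum_i `|d i| by apply: sumr_ge0.
rewrite -(ger0_norm s0) -sqrtr_sqr ler_wsqrtr //.
have e1 : (\sum_i `|d i|) ^+ 2 = \sum_i \sum_j `|d i| * `|d j|.
  by rewrite expr2 mulr_suml; apply: eq_bigr => i _; rewrite mulr_sumr.
have e2 : \sum_i \sum_j (d i ^+ 2 + d j ^+ 2) = 2 * (n%:R * \sum_i d i ^+ 2).
  under eq_bigr do rewrite big_split /= sumr_const card_ord.
  rewrite big_split /= sumr_const card_ord.
  by rewrite sumrMnl !mulr_natl mulr2n.
rewrite -(@ler_pM2l _ 2) // e1 -e2 mulr_sumr; apply: ler_sum => i _.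
rewrite mulr_sumr; apply: ler_sum => j _.
rewrite -!(real_normK (num_real (d _))).
have := sqr_ge0 (`|d i| - `|d j|); rewrite sqrrB => h.
rewrite -subr_ge0; apply: le_trans h _; rewrite le_eqVlt; apply/orP; left; apply/eqP; ring.
Qed.

End Gen.

Section Main.
Variables (R : realType) (X : finType) (m K : nat) (nu : 'I_m -> 'I_K -> X -> R).
Hypothesis nud : forall i a, is_dist (nu i a).
Hypothesis nup : forall i a x, 0 < nu i a x.

Definition Lsum (p : 'I_m -> R) a x := \sum_i p i * ln (nu i a x).
Definition F (p : 'I_m -> R) a (Q : X -> R) := \sum_i p i * KL Q (nu i a).
Definition Ssum (p : 'I_m -> R) := \sum_(k < m) p k.
Definition V (p : 'I_m -> R) a :=
  if 0 < Ssum p then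
    - Ssum p * ln (\sum_(x : X) \prod_(i < m) (nu i a x) `^ (p i / Ssum p))
  else inf (range (fun x : X => - Lsum p a x)).

Lemma Hform_V p : Hform nu p = sup (range (V p)).
Proof. by rewrite /Hform /V -/(Ssum p); case: ifP. Qed.

Lemma KL_eq (Q r : X -> R) : is_dist Q -> (forall x, 0 < r x) ->
  KL Q r = Ent Q - \sum_x Q x * ln (r x).
Proof.
move=> [Q0 _] r0; rewrite /KL /Ent -sumrB; apply: eq_bigr => x _.
case: ifPn => [/eqP ->|qn]; first by rewrite mul0r subr0.
have qp : 0 < Q x by rewrite lt_neqAle eq_sym qn Q0.
by rewrite lnM ?posrE ?invr_gt0 // lnV ?posrE // mulrDr mulrN.
Qed.

Lemma F_eq p a Q : is_dist Q -> F p a Q = Ssum p * Ent Q - \sum_x Q x * Lsum p a x.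
Proof.
move=> Qd; rewrite /F.
under eq_bigr do rewrite KL_eq // mulrBr.
rewrite sumrB /Ssum mulr_suml; congr (_ - _).
under eq_bigr do rewrite mulr_sumr.
rewrite exchange_big; apply: eq_bigr => x _; rewrite /Lsum mulr_sumr.
by apply: eq_bigr => i _; rewrite mulrCA.
Qed.

Lemma obj_eq p Q w : obj nu p Q w = \sum_a w a * F p a (Q a).
Proof.
rewrite /obj exchange_big; apply: eq_bigr => a _; rewrite /F mulr_sumr.
by apply: eq_bigr => i _; rewrite mulrAC -mulrA.
Qed.

Lemma X_inhab : m != 0%N -> K != 0%N -> exists x : X, true.
Proof.
case: m nu nud => // m' nu' nud' _; case: K nu' nud' => // K' nu' nud' _.
case: (pickP X) => [x _|H]; first by exists x.
have [_ h] := nud' ord0 ord0; move: h; rewrite big_pred0 // => /eqP.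
by rewrite eq_sym oner_eq0.
Qed.

Lemma Ent_delta (x0 : X) : Ent (@delta R _ x0) = 0.
Proof.
apply: big1 => x _; rewrite /delta; case: (x == x0) => /=.
  by rewrite oner_eq0 ln1 mulr0.
by rewrite eqxx.
Qed.

Lemma g_eq p a x : Ssum p != 0 ->
  \prod_(i < m) (nu i a x) `^ (p i / Ssum p) = expR (Lsum p a x / Ssum p).
Proof.
move=> s0; rewrite /Lsum mulr_suml expR_sum; apply: eq_bigr => i _.
by rewrite /powR gt_eqF // mulrAC.
Qed.

Lemma V_lb_att p a (x0 : X) :
  (forall Q, is_dist Q -> V p a <= F p a Q) /\ exists2 Q, is_dist Q & F p a Q = V p a.
Proof.
rewrite /V; case: ifPn => [s0|s0].
  have sn0 : Ssum p != 0 by rewrite gt_eqF.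
  set g := fun x => expR (Lsum p a x / Ssum p).
  have gp : forall x, 0 < g x by move=> x; exact: expR_gt0.
  have Le : forall x, Lsum p a x = Ssum p * ln (g x).
    by move=> x; rewrite /g expRK mulrC divfK.
  have Z0 : 0 < \sum_x g x.
    by rewrite (bigD1 x0) //= ltr_wpDr // sumr_ge0 // => u _; apply: ltW.
  under eq_bigr do rewrite g_eq //.
  have FE : forall Q, is_dist Q -> F p a Q = Ssum p * (Ent Q - \sum_x Q x * ln (g x)).
    move=> Q Qd; rewrite F_eq // mulrBr; congr (_ - _); rewrite mulr_sumr.
    by apply: eq_bigr => x _; rewrite Le mulrCA.
  split.
    move=> Q Qd; rewrite FE // mulNr -mulrN; apply: ler_wpM2l; first exact: ltW.
    exact: gibbs.
  set Q := fun x => g x / \sum_u g u.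
  have Qp : forall x, 0 < Q x by move=> x; rewrite /Q divr_gt0.
  have Q1 : \sum_x Q x = 1 by rewrite /Q -mulr_suml divff // gt_eqF.
  have Qd : is_dist Q by split => // x; apply: ltW.
  exists Q => //; rewrite FE // mulNr -mulrN; congr (_ * _).
  rewrite /Ent -sumrB.
  have -> : \sum_x ((if Q x == 0 then 0 else Q x * ln (Q x)) - Q x * ln (g x)) =
            \sum_x Q x * (- ln (\sum_u g u)).
    apply: eq_bigr => x _; rewrite gt_eqF // /Q lnM ?posrE ?invr_gt0 // lnV ?posrE //.
    by rewrite mulrDr addrAC subrr add0r.
  by rewrite -mulr_suml Q1 mul1r.
set c := fun x => - Lsum p a x.
have [x1 Hx1] := argmin_ex x0 c.
rewrite (inf_range_min Hx1); split.
  move=> Q Qd; rewrite F_eq //.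
  have e0 : 0 <= Ssum p * Ent Q by apply: mulr_le0; [rewrite leNgt|exact: Ent_le0].
  apply: le_trans (_ : \sum_x Q x * c x <= _).
    apply: le_trans (_ : \sum_x Q x * c x1 <= _).
      by rewrite -mulr_suml (proj2 Qd) mul1r.
    by apply: ler_sum => x _; apply: ler_wpM2l; [case: Qd|].
  rewrite -[X in X <= _]add0r -sumrN; apply: lerD => //.
  by apply: ler_sum => x _; rewrite /c mulrN.
exists (@delta R _ x1); first exact: delta_dist.
  rewrite F_eq; last exact: delta_dist.
  by rewrite (Ent_delta x1) mulr0 sub0r delta_sum.
Qed.


Variable eps : R.
Hypothesis eps0 : 0 < eps.
Hypothesis epsle : forall i a x, eps <= nu i a x.
Variables (a0 : 'I_K) (x0 : X).

Lemma sumw_le (T : finType) (w c : T -> R) a : is_dist w -> (forall b, c b <= c a) ->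
  \sum_b w b * c b <= c a.
Proof.
move=> [w0 w1] Ha; apply: le_trans (_ : \sum_b w b * c a <= _).
  by apply: ler_sum => b _; apply: ler_wpM2l.
by rewrite -mulr_suml w1 mul1r.
Qed.

Lemma Qs_ex p : exists Qs : 'I_K -> X -> R,
  (forall a, is_dist (Qs a)) /\ forall a, F p a (Qs a) = V p a.
Proof.
have H : forall a, exists Q, is_dist Q /\ F p a Q = V p a.
  by move=> a; have [_ [Q Qd QE]] := V_lb_att p a x0; exists Q.
have [Qs HQ] := choice H; exists Qs; split => a; by case: (HQ a).
Qed.

Lemma KL_ge0 Q i a : is_dist Q -> 0 <= KL Q (nu i a).
Proof.
move=> Qd; rewrite KL_eq //; have := gibbs Qd (nup i a).
by rewrite (proj2 (nud i a)) ln1 oppr0.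
Qed.

Lemma KL_le Q i a : is_dist Q -> KL Q (nu i a) <= ln (eps^-1).
Proof.
move=> Qd; rewrite KL_eq // lnV ?posrE //.
apply: le_trans (_ : - \sum_x Q x * ln (nu i a x) <= _).
  by rewrite -[X in _ <= X]add0r lerD2r Ent_le0.
apply: le_trans (_ : \sum_x Q x * (- ln eps) <= _); last first.
  by rewrite -mulr_suml (proj2 Qd) mul1r.
rewrite -sumrN; apply: ler_sum => x _; rewrite -mulrN; apply: ler_wpM2l.
  by case: Qd.
by rewrite lerN2 ler_ln ?posrE.
Qed.

Lemma F_mono p q a Q : is_dist Q -> (forall i, p i <= q i) -> F p a Q <= F q a Q.
Proof.
move=> Qd pq; apply: ler_sum => i _; apply: ler_wpM2r => //; exact: KL_ge0.
Qed.

Definition Cst (p q : 'I_m -> R) := ln (eps^-1) * \sum_i `|p i - q i|.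

Lemma F_lip p q a Q : is_dist Q -> F p a Q <= F q a Q + Cst p q.
Proof.
move=> Qd; rewrite addrC -lerBlDr /F -sumrB /Cst mulr_sumr; apply: ler_sum => i _.
rewrite -mulrBl mulrC; apply: le_trans (_ : KL Q (nu i a) * `|p i - q i| <= _).
  by apply: ler_wpM2l; [exact: KL_ge0|exact: ler_norm].
by apply: ler_wpM2r; [exact: normr_ge0|exact: KL_le].
Qed.

Lemma V_mono p q a : (forall i, p i <= q i) -> V p a <= V q a.
Proof.
move=> pq; have [Qs [Qd QE]] := Qs_ex q; rewrite -QE.
apply: le_trans (_ : F p a (Qs a) <= _); first by apply: (proj1 (V_lb_att p a x0)).
exact: F_mono.
Qed.

Lemma V_lip p q a : V p a <= V q a + Cst p q.
Proof.
have [Qs [Qd QE]] := Qs_ex q; rewrite -QE.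
apply: le_trans (_ : F p a (Qs a) <= _); first by apply: (proj1 (V_lb_att p a x0)).
exact: F_lip.
Qed.



Lemma obj_fun p Q : obj nu p Q = fun w => \sum_a w a * F p a (Q a).
Proof. by apply/funext => w; rewrite obj_eq. Qed.

Lemma SQ_eq p Q : exists a, (forall b, F p b (Q b) <= F p a (Q a)) /\
  sup [set u | exists2 w, is_dist w & u = obj nu p Q w] = F p a (Q a).
Proof. by rewrite obj_fun /=; exact: (supW a0 (fun b => F p b (Q b))). Qed.

Lemma IW_eq p w : is_dist w ->
  inf [set u | exists2 Q, is_Q Q & u = obj nu p Q w] = \sum_a w a * V p a /\
  exists2 Q, is_Q Q & obj nu p Q w = \sum_a w a * V p a.
Proof.
move=> wd; have [Qs [Qd QE]] := Qs_ex p.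
have oQ : obj nu p Qs w = \sum_a w a * V p a.
  by rewrite obj_eq; apply: eq_bigr => a _; rewrite QE.
split; last by exists Qs.
apply: inf_eq_min; first by exists Qs.
move=> _ [Q HQ ->]; rewrite obj_eq; apply: ler_sum => a _.
apply: ler_wpM2l; first by case: wd.
exact: (proj1 (V_lb_att p a x0)).
Qed.

Lemma per_p p a1 : (forall b, V p b <= V p a1) ->
  Hplus nu p = V p a1 /\
     (exists2 Q, is_Q Q &
        Hplus nu p = sup [set u | exists2 w, is_dist w & u = obj nu p Q w]) /\
     (forall Q, is_Q Q -> exists2 w, is_dist w &
        obj nu p Q w = sup [set u | exists2 w', is_dist w' & u = obj nu p Q w']) /\
     (exists2 w, is_dist w &
        Hminus nu p = inf [set u | exists2 Q, is_Q Q & u = obj nu p Q w]) /\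
     (forall w, is_dist w -> exists2 Q, is_Q Q &
        obj nu p Q w = inf [set u | exists2 Q', is_Q Q' & u = obj nu p Q' w]) /\
     Hplus nu p = Hminus nu p /\ Hplus nu p = Hform nu p.
Proof.
move=> Ha1; have [Qs [Qd QE]] := Qs_ex p.
have [a' [Ha' SE]] := SQ_eq p Qs.
rewrite QE in SE.
have {}Ha' : forall b, V p b <= V p a' by move=> b; rewrite -!QE.
have e1 : V p a' = V p a1 by apply/le_anti; rewrite Ha1 Ha'.
have HP : Hplus nu p = V p a1.
  rewrite /Hplus; apply: inf_eq_min; first by exists Qs => //; rewrite SE.
  move=> _ [Q HQ ->]; have [b [Hb ->]] := SQ_eq p Q.
  apply: le_trans (Hb a1); exact: (proj1 (V_lb_att p a1 x0)).
have HM : Hminus nu p = V p a1.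
  rewrite /Hminus; apply: sup_eq_max.
    exists (@delta R _ a1); first exact: delta_dist.
    by rewrite (proj1 (IW_eq p (delta_dist R a1))) delta_sum.
  move=> _ [w wd ->]; rewrite (proj1 (IW_eq p wd)); exact: sumw_le.
have HF : Hform nu p = V p a1 by rewrite Hform_V; exact: sup_range_max.
split => //; split; first by exists Qs => //; rewrite SE e1.
split.
  move=> Q HQ; have [b [Hb ->]] := SQ_eq p Q.
  exists (@delta R _ b); first exact: delta_dist.
  by rewrite obj_eq delta_sum.
split.
  exists (@delta R _ a1); first exact: delta_dist.
  by rewrite (proj1 (IW_eq p (delta_dist R a1))) delta_sum.
split.
  move=> w wd; have [E [Q HQ EQ]] := IW_eq p wd; exists Q => //; by rewrite E.
by rewrite HP HM HF.
Qed.

Lemma Hplus_max p : exists a, Hplus nu p = V p a /\ forall b, V p b <= V p a.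
Proof.
have [a Ha] := argmax_ex a0 (V p); exists a; split => //.
exact: (proj1 (per_p Ha)).
Qed.
End Main.

Theorem mainTheorem4 (R : realType) (X : finType) (m K : nat)
    (nu : 'I_m -> 'I_K -> X -> R) (eps : R) :
  (2 <= m)%N -> (0 < K)%N ->
  0 < eps -> eps < 1 ->
  (forall i a, is_dist (nu i a)) ->
  (forall i a x, eps <= nu i a x) ->
  (forall p : 'I_m -> R,
     (* the min over Q and the inner max over w are attained *)
     (exists2 Q, is_Q Q &
        Hplus nu p = sup [set u | exists2 w, is_dist w & u = obj nu p Q w]) /\
     (forall Q, is_Q Q -> exists2 w, is_dist w &
        obj nu p Q w = sup [set u | exists2 w', is_dist w' & u = obj nu p Q w']) /\
     (* the max over w and the inner min over Q are attained *)
     (exists2 w, is_dist w &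
        Hminus nu p = inf [set u | exists2 Q, is_Q Q & u = obj nu p Q w]) /\
     (forall w, is_dist w -> exists2 Q, is_Q Q &
        obj nu p Q w = inf [set u | exists2 Q', is_Q Q' & u = obj nu p Q' w]) /\
     (* minimax equality and closed form *)
     Hplus nu p = Hminus nu p /\ Hplus nu p = Hform nu p) /\
  (* Lipschitz continuity with constant sqrt(m) log(1/eps) (Euclidean norm) *)
  (forall p q : 'I_m -> R,
     `|Hplus nu p - Hplus nu q| <=
       Num.sqrt (m%:R) * ln (eps^-1) * Num.sqrt (\sum_(i < m) (p i - q i) ^+ 2)) /\
  (* non-decreasing in each coordinate *)
  (forall (i : 'I_m) (p q : 'I_m -> R),
     (forall j, j != i -> p j = q j) -> p i <= q i -> Hplus nu p <= Hplus nu q).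
Proof.
move=> m2 K0 eps0 eps1 nud epsle.
have nup : forall i a x, 0 < nu i a x.
  by move=> i a x; apply: lt_le_trans (epsle i a x).
have a0 : 'I_K := Ordinal K0.
have mn0 : m != 0%N by rewrite -lt0n; exact: ltnW.
have [x0 _] := X_inhab nud mn0 (lt0n_neq0 K0).
have HM := Hplus_max nup a0 x0.
split.
  move=> p; have [a [_ Ha]] := HM p.
  by case: (per_p nup a0 x0 Ha).
split.
  move=> p q.
  have [a1 [E1 H1]] := HM p; have [a2 [E2 H2]] := HM q.
  have CS : Cst eps q p = Cst eps p q.
    by rewrite /Cst; congr (_ * _); apply: eq_bigr => i _; rewrite distrC.
  have L1 : Hplus nu p - Hplus nu q <= Cst eps p q.
    rewrite E1 E2 lerBlDl addrC; apply: le_trans (V_lip nud nup eps0 epsle x0 p q a1) _.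
    by rewrite addrC lerD2r.
  have L2 : Hplus nu q - Hplus nu p <= Cst eps p q.
    rewrite E1 E2 lerBlDl addrC -CS; apply: le_trans (V_lip nud nup eps0 epsle x0 q p a2) _.
    by rewrite addrC lerD2r.
  have L3 : `|Hplus nu p - Hplus nu q| <= Cst eps p q.
    by rewrite ler_norml L1 andbT lerNl opprB.
  apply: le_trans L3 _.
  have l0 : 0 <= ln (eps^-1) by apply: ln_ge0; rewrite invf_ge1 // ltW.
  rewrite /Cst; apply: le_trans (ler_wpM2l l0 (cauchy_schwarz (fun i => p i - q i))) _.
  by rewrite mulrCA mulrA.
move=> i p q hj hi.
have pq : forall j, p j <= q j.
  by move=> j; case: (eqVneq j i) => [->|/hj ->].
have [a1 [E1 H1]] := HM p; have [a2 [E2 H2]] := HM q.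
rewrite E1 E2; apply: le_trans (H2 a1); exact: (V_mono nud nup x0).
Qed.
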